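(* Consider the semidiscrete homogenized eddy current system with circuit coupling, in the unknowns $a(t)\in\mathbb{R}^m$, $i_R(t)\in\mathbb{R}$, $v_R(t)\in\mathbb{R}$: \begin{align*} C^\top M_{\nu,\tau}C\tfrac{d}{dt}a+C^\top M_\nu C a&=Xi_R,\\ X^\top\tfrac{d}{dt}a&=v_R, \end{align*} with internal variable $x_R=a$. Under the assumptions listed in the context, this system is a strongly resistance-like element.
   Context: Assumptions: $C\in\mathbb{R}^{f\times m}$ (gauged discrete curl with homogeneous Dirichlet conditions incorporated) has full column rank; $M_\nu\in\mathbb{R}^{f\times f}$ (reluctivity matrix) is symmetric positive definite; $M_{\nu,\tau}\in\mathbb{R}^{f\times f}$ (reluctivity weighted by the cable time constant) is symmetric positive semidefinite; $X\in\mathbb{R}^m$ is the discretized winding density function, a nonzero vector; $Q_\tau$ is the orthogonal projector onto $\ker(C^\top M_{\nu,\tau}C)$, $P_\tau=I-Q_\tau$, and $Q_\tau^\top X=0$ (no excitation outside the coils). Definitions: a function $F(u,y)$ is strongly monotone with respect to $u$ if there is $c>0$ with $\langle F(u,y)-F(\bar u,y),u-\bar u\rangle\ge c\|u-\bar u\|^2$ for all $y,u,\bar u$. A resistance-like element is one described by $f_R(\frac{d}{dt}d_R(x_R,i_R,v_R,t),x_R,i_R,v_R,t)=0$ such that at most one differentiation with respect to $t$ is needed to obtain $x_R'=\varphi_R(x_R,i_R,v_R,t)$, $i_R'=g_R(v_R',x_R,i_R,v_R,t)$; it is strongly resistance-like if additionally $g_R(v_R',x_R,i_R,v_R,t)$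 is continuous and strongly monotone with respect to $v_R'$. *)

(* Defs.v *)
From HB Require Import structures.
From mathcomp Require Import all_boot all_order all_algebra.
From mathcomp Require Import all_classical all_reals all_analysis.
Set Implicit Arguments. Unset Strict Implicit. Unset Printing Implicit Defensive.
Import Order.TTheory GRing.Theory Num.Theory.
Import numFieldNormedType.Exports.
Local Open Scope ring_scope.

(* Vectors in R^n are column vectors 'cV[R]_n; scalars (i_R, v_R) are 'cV[R]_1. *)

Definition dotv (R : realType) (n : nat) (u w : 'cV[R]_n) : R :=
  \sum_(k < n) u k 0 * w k 0.

Definition strongly_monotone_wrt (R : realType) (n : nat) (Y : Type)
    (F : 'cV[R]_n -> Y -> 'cV[R]_n) : Prop :=
  exists c : R, 0 < c /\
    forall (y : Y) (u ub : 'cV[R]_n),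
      dotv (F u y - F ub y) (u - ub) >= c * dotv (u - ub) (u - ub).

(* A (nonlinear, time dependent) element
     f_R( d/dt d_R(x_R,i_R,v_R,t), x_R, i_R, v_R, t) = 0
   is described by fR and dR.  [resistance_like_with fR dR phi g] says that
   the derivative array of order one (the equations and their first time
   derivative, i.e. at most one differentiation) determines
     x_R' = phi(x_R,i_R,v_R,t)  and  i_R' = g(v_R',x_R,i_R,v_R,t).
   This is phrased pointwise along trajectories: whenever a differentiable
   trajectory satisfies, at time t, the equations (r t = 0) and their first
   derivative (r' t = 0), the two identities hold at t. *)
Definition resistance_like_with (R : realType) (nd nf nx p : nat)
    (fR : 'cV[R]_nd -> 'cV[R]_nx -> 'cV[R]_p -> 'cV[R]_p -> R -> 'cV[R]_nf)
    (dR : 'cV[R]_nx -> 'cV[R]_p -> 'cV[R]_p -> R -> 'cV[R]_nd)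
    (phi : 'cV[R]_nx -> 'cV[R]_p -> 'cV[R]_p -> R -> 'cV[R]_nx)
    (g : 'cV[R]_p * 'cV[R]_nx * 'cV[R]_p * 'cV[R]_p * R -> 'cV[R]_p) : Prop :=
  forall (x : R -> 'cV[R]_nx) (i v : R -> 'cV[R]_p) (t : R),
    (forall s, derivable x s 1) ->
    (forall s, derivable i s 1) ->
    (forall s, derivable v s 1) ->
    (forall s, derivable (fun s => dR (x s) (i s) (v s) s) s 1) ->
    let r := fun s =>
      fR (derive1 (fun s => dR (x s) (i s) (v s) s) s) (x s) (i s) (v s) s in
    r t = 0 -> derivable r t 1 -> derive1 r t = 0 ->
    derive1 x t = phi (x t) (i t) (v t) t /\
    derive1 i t = g ((derive1 v t), x t, i t, v t, t).

Definition resistance_like (R : realType) (nd nf nx p : nat)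
    (fR : 'cV[R]_nd -> 'cV[R]_nx -> 'cV[R]_p -> 'cV[R]_p -> R -> 'cV[R]_nf)
    (dR : 'cV[R]_nx -> 'cV[R]_p -> 'cV[R]_p -> R -> 'cV[R]_nd) : Prop :=
  exists phi g, resistance_like_with fR dR phi g.

Definition strongly_resistance_like (R : realType) (nd nf nx p : nat)
    (fR : 'cV[R]_nd -> 'cV[R]_nx -> 'cV[R]_p -> 'cV[R]_p -> R -> 'cV[R]_nf)
    (dR : 'cV[R]_nx -> 'cV[R]_p -> 'cV[R]_p -> R -> 'cV[R]_nd) : Prop :=
  exists phi g, resistance_like_with fR dR phi g /\
    continuous g /\
    strongly_monotone_wrt
      (fun (w : 'cV[R]_p) (y : 'cV[R]_nx * 'cV[R]_p * 'cV[R]_p * R) =>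
         g (w, y.1.1.1, y.1.1.2, y.1.2, y.2)).

Definition sym_posdef (R : realType) (n : nat) (M : 'M[R]_n) : Prop :=
  M^T = M /\ forall y : 'cV[R]_n, y != 0 -> 0 < (y^T *m M *m y) 0 0.
Definition sym_possemidef (R : realType) (n : nat) (M : 'M[R]_n) : Prop :=
  M^T = M /\ forall y : 'cV[R]_n, 0 <= (y^T *m M *m y) 0 0.

Definition orth_proj_onto_ker (R : realType) (n : nat) (Q K : 'M[R]_n) : Prop :=
  Q^T = Q /\ Q *m Q = Q /\ forall y : 'cV[R]_n, (K *m y == 0) = (Q *m y == y).

(* The homogenized eddy current element:
     C^T M_{nu,tau} C a' + C^T M_nu C a - X i_R = 0,   X^T a' - v_R = 0,
   with internal variable x_R = a and d_R(a,i_R,v_R,t) = a. *)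
Definition eddy_fR (R : realType) (f m : nat) (C : 'M[R]_(f, m))
    (Mnu Mnutau : 'M[R]_f) (X : 'cV[R]_m)
    (y : 'cV[R]_m) (a : 'cV[R]_m) (i v : 'cV[R]_1) (t : R) : 'cV[R]_(m + 1) :=
  col_mx (C^T *m Mnutau *m C *m y + C^T *m Mnu *m C *m a - X *m i)
         (X^T *m y - v).

Definition eddy_dR (R : realType) (m : nat)
    (a : 'cV[R]_m) (i v : 'cV[R]_1) (t : R) : 'cV[R]_m := a.

(* Main.v *)
Require Import Defs.
From HB Require Import structures.
From mathcomp Require Import all_boot all_order all_algebra.
From mathcomp Require Import all_classical all_reals all_analysis.
From mathcomp Require Import ring lra.
Import Order.TTheory GRing.Theory Num.Theory.
Import numFieldNormedType.Exports.
Local Open Scope ring_scope.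


Set Implicit Arguments. Unset Strict Implicit.
Lemma zmod_re (T : zmodType) (A B Cc V : T) : A + B - Cc - (A - V) = B - Cc + V.
Proof. rewrite opprB -!addrA addrCA; congr (_ + _); rewrite addrCA; congr (_ + _). by rewrite addrCA subrr addr0. Qed.

Section A.
Context {R : realType}.
Lemma mulmx_cont n p q (A : 'M[R]_(n,p)) :
  continuous (fun y : 'M[R]_(p,q) => A *m y).
Proof.
have -> : (fun y : 'M[R]_(p,q) => A *m y) =
   (fun y => \sum_(i < p) \sum_(j < q) y i j *: (A *m delta_mx i j)).
  apply/funext => y; rewrite {1}(matrix_sum_delta y) linear_sum.
  apply: eq_bigr => i _; rewrite linear_sum; apply: eq_bigr => j _.
  by rewrite linearZ.
have sumc : forall (I : Type) (r : seq I) (F : I -> 'M[R]_(p,q) -> 'M[R]_(n,q)),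
   (forall i, continuous (F i)) -> continuous (fun y => \sum_(i <- r) F i y).
  move=> I r F Fc; elim: r => [|a r IH].
    have -> : (fun y : 'M[R]_(p,q) => \sum_(i <- [::]) F i y) = (fun=> 0).
      by apply/funext => y; rewrite big_nil.
    exact: cst_continuous.
  have -> : (fun y => \sum_(i <- a :: r) F i y) = F a + (fun y => \sum_(i <- r) F i y).
    by apply/funext => y; rewrite big_cons.
  by move=> y; apply: continuousD; [exact: Fc | exact: IH].
apply: (sumc) => i; apply: (sumc) => j.
move=> y; apply: continuousZr_tmp; exact: coord_continuous.
Qed.
Lemma derive1_linear (U W : normedModType R) (F : {linear U -> W}) (h : R -> U) t :
  continuous F -> derivable h t 1 ->
  derivable (F \o h) t 1 /\ derive1 (F \o h) t = F (derive1 h t).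
Proof.
move=> Fc hd.
have dh : differentiable h t by apply/derivable1_diffP.
have dF : differentiable F (h t) by apply: linear_differentiable.
have dFh : differentiable (F \o h) t by apply: differentiable_comp.
split; first by apply/derivable1_diffP.
rewrite !derive1E !deriveE // diff_comp // diff_lin //.
Qed.
Lemma mx_eq0_cV n p (M : 'M[R]_(n,p)) :
  (forall u : 'cV[R]_p, M *m u = 0) -> M = 0.
Proof.
move=> H; apply/matrixP => a b.
have := congr1 (fun N : 'cV[R]_n => N a 0) (H (delta_mx b 0)).
by rewrite -colE !mxE.
Qed.

Lemma psd_null n (K : 'M[R]_n) (w : 'cV[R]_n) :
  K^T = K -> (forall y : 'cV[R]_n, 0 <= (y^T *m K *m y) 0 0) ->
  (w^T *m K *m w) 0 0 = 0 -> K *m w = 0.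
Proof.
move=> KT Kp w0.
have key : forall u : 'cV[R]_n, (u^T *m K *m w) 0 0 = 0.
  move=> u.
  set a := (u^T *m K *m w) 0 0.
  set b := (u^T *m K *m u) 0 0.
  have b0 : 0 <= b by apply: Kp.
  have ea : (u^T *m K *m w) 0 0 = a := erefl.
  have eb : (u^T *m K *m u) 0 0 = b := erefl.
  clearbody a b.
  have H : forall s : R, 0 <= 2 * s * a + s ^+ 2 * b.
    move=> s; have := Kp (w + s *: u).
    have e1 : (w^T *m K *m u) 0 0 = a.
      rewrite -ea.
      have <- : ((w^T *m K *m u)^T) 0 0 = (w^T *m K *m u) 0 0 by rewrite mxE.
      by rewrite !trmx_mul trmxK KT mulmxA.
    rewrite [(w + _)^T]linearD /= [(s *: u)^T]linearZ /= !mulmxDl !mulmxDr -!scalemxAl -!scalemxAr.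
    set A1 := w^T *m K *m w; set A2 := w^T *m K *m u; set A3 := u^T *m K *m w; set A4 := u^T *m K *m u.
    have eA1 : A1 0 0 = 0 := w0.
    have eA2 : A2 0 0 = a := e1.
    have eA3 : A3 0 0 = a := ea.
    have eA4 : A4 0 0 = b := eb.
    clearbody A1 A2 A3 A4.
    rewrite !mxE eA1 eA2 eA3 eA4.
    move=> h; apply: le_trans h _; rewrite le_eqVlt; apply/orP; left; apply/eqP.
    ring.
  have bp : 0 < b + 1 by rewrite ltr_wpDl.
  have := H (- a / (b + 1)).
  set s := - a / (b + 1).
  have hs : a = - s * (b + 1) by rewrite /s !mulNr opprK divfK // gt_eqF.
  clearbody s; rewrite hs => h.
  have h2 : 0 <= - (s ^+ 2 * (b + 2) * (b + 1) ^+ 2).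
    apply: le_trans (mulr_ge0 h (exprn_ge0 2 (ltW bp))) _; rewrite le_eqVlt; apply/orP; left; apply/eqP; ring.
  have hs2 : s ^+ 2 * ((b + 2) * (b + 1) ^+ 2) <= 0 by rewrite mulrA -oppr_ge0.
  have hp : 0 < (b + 2) * (b + 1) ^+ 2 by rewrite mulr_gt0 ?exprn_gt0 // ltr_wpDl.
  have : s ^+ 2 <= 0 by move: hs2; rewrite pmulr_lle0.
  have := sqr_ge0 s => h3 h4.
  have : s ^+ 2 = 0 by apply/eqP; rewrite eq_le h4 h3.
  by move/eqP; rewrite sqrf_eq0 => /eqP ->; rewrite oppr0 mul0r.
apply/matrixP => j k; rewrite ord1 mxE.
have := key (delta_mx j 0).
rewrite -mulmxA -[(delta_mx j 0)^T]/(@trmx R n 1 (delta_mx j 0)) trmx_delta.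
by rewrite -rowE !mxE.
Qed.
Lemma comp_mulmx_cont (T : topologicalType) k l q (A : 'M[R]_(k,l))
  (h : T -> 'M[R]_(l,q)) : continuous h -> continuous (fun p => A *m h p).
Proof.
move=> hc p; apply: (@continuous_comp _ _ _ h (fun y => A *m y)); first exact: hc.
exact: mulmx_cont.
Qed.

Lemma cont_fst (T U : topologicalType) : continuous (@fst T U).
Proof. move=> p; exact: cvg_fst. Qed.
Lemma cont_snd (T U : topologicalType) : continuous (@snd T U).
Proof. move=> p; exact: cvg_snd. Qed.
Lemma cont_comp' (S T U : topologicalType) (f : S -> T) (g : T -> U) :
  continuous f -> continuous g -> continuous (g \o f).
Proof. by move=> fc gc p; apply: continuous_comp; [exact: fc|exact: gc]. Qed.
Lemma contD' (T : topologicalType) (V : normedModType R) (f g : T -> V) :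
  continuous f -> continuous g -> continuous (fun p => f p + g p).
Proof. by move=> fc gc p; apply: continuousD; [exact: fc|exact: gc]. Qed.
Lemma contB' (T : topologicalType) (V : normedModType R) (f g : T -> V) :
  continuous f -> continuous g -> continuous (fun p => f p - g p).
Proof. by move=> fc gc p; apply: continuousB; [exact: fc|exact: gc]. Qed.
End A.

Unset Implicit Arguments.
Set Strict Implicit.

Theorem proposition9 (R : realType) (f m : nat) (C : 'M[R]_(f, m))
    (Mnu Mnutau : 'M[R]_f) (X : 'cV[R]_m) (Qtau : 'M[R]_m) :
  \rank C = m ->
  sym_posdef Mnu ->
  sym_possemidef Mnutau ->
  X != 0 ->
  orth_proj_onto_ker Qtau (C^T *m Mnutau *m C) ->
  Qtau^T *m X = 0 ->
  strongly_resistance_like (eddy_fR C Mnu Mnutau X) (@eddy_dR R m).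
Proof.
move=> rkC [MnuT Mnup] [MtT Mtp] X0 [QT [QQ Qker]] QX0.
set K := C^T *m Mnutau *m C in Qker *.
set L := C^T *m Mnu *m C.
move: Qtau QT QQ Qker QX0 => Q QT QQ Qker QX0.
have KT : K^T = K by rewrite /K !trmx_mul trmxK MtT mulmxA.
have Kpsd : forall y : 'cV[R]_m, 0 <= (y^T *m K *m y) 0 0.
  move=> y; have := Mtp (C *m y).
  by rewrite /K trmx_mul !mulmxA.
have KQ : K *m Q = 0.
  apply: mx_eq0_cV => u; rewrite -mulmxA; apply/eqP.
  by rewrite Qker mulmxA QQ.
have QK : Q *m K = 0 by rewrite -QT -KT -trmx_mul KQ trmx0.
have QX : Q *m X = 0 by rewrite -QT.
have [zT XzK] : exists zT : 'rV[R]_m, X^T = zT *m K.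
  apply/submxP; rewrite submxE.
  set N := cokermx K.
  have KN : K *m N = 0 by apply: mulmx_coker.
  have QN : Q *m N = N.
    apply/eqP; rewrite -subr_eq0; apply/eqP; apply: mx_eq0_cV => u.
    rewrite mulmxBl -mulmxA; apply/eqP; rewrite subr_eq0; rewrite -Qker.
    by rewrite mulmxA KN mul0mx.
  by rewrite -QN mulmxA -[Q in X^T *m Q]trmxK -trmx_mul QX0 trmx0 mul0mx.
have XKz : X = K *m zT^T by rewrite -[X]trmxK XzK trmx_mul KT.
set zX := zT *m X.
have zXE : zX = zT^T^T *m K *m zT^T by rewrite trmxK /zX XKz mulmxA.
have zXpos : 0 < zX 0 0.
  rewrite lt_def zXE Kpsd andbT; apply/eqP => h.
  have := psd_null KT Kpsd h; rewrite -XKz => X0'.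
  by move/eqP: X0.
set c := (zX 0 0)^-1.
have cpos : 0 < c by rewrite invr_gt0.
have injB : forall y : 'cV[R]_m, K *m y = 0 -> Q *m L *m y = 0 -> y = 0.
  move=> y Ky QLy.
  have Qy : Q *m y = y by apply/eqP; rewrite -Qker Ky.
  have yLy : (y^T *m L *m y) 0 0 = 0.
    rewrite -{1}Qy trmx_mul QT.
    have -> : y^T *m Q *m L *m y = y^T *m (Q *m L *m y) by rewrite !mulmxA.
    by rewrite QLy mulmx0 mxE.
  have Cy : C *m y = 0.
    apply/eqP; apply/negPn/negP => Cy0.
    have := Mnup _ Cy0.
    have -> : (C *m y)^T *m Mnu *m (C *m y) = y^T *m L *m y.
      by rewrite /L trmx_mul !mulmxA.
    by rewrite yLy ltxx.
  have rf : row_free C^T by rewrite /row_free mxrank_tr rkC.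
  apply: trmx_inj; rewrite trmx0; apply/eqP.
  by rewrite -(mulmx_free_eq0 _ rf) -trmx_mul Cy trmx0.
have rfB : row_free (col_mx K (Q *m L))^T.
  rewrite -kermx_eq0; apply/eqP/row_matrixP => k; rewrite row0.
  set u := row k _.
  have uB : u *m (col_mx K (Q *m L))^T = 0 by apply/sub_kermxP; rewrite row_sub.
  have : col_mx K (Q *m L) *m u^T = 0.
    by rewrite -[_ *m u^T]trmxK trmx_mul trmxK uB trmx0.
  rewrite mul_col_mx => /eqP; rewrite col_mx_eq0 => /andP[/eqP h1 /eqP h2].
  by move: (injB _ h1 h2) => /(congr1 trmx); rewrite trmxK trmx0.
have [P0 HP0] := row_freeP rfB.
set P := P0^T.
have PB : P *m col_mx K (Q *m L) = 1%:M.
  by rewrite /P -[col_mx K _]trmxK -trmx_mul HP0 trmx1.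
set P1 := P *m col_mx 1%:M 0.
pose phi := fun (x : 'cV[R]_m) (i v : 'cV[R]_1) (t : R) => P1 *m (X *m i - L *m x).
pose M := zT *m L *m P1.
pose g := fun p : 'cV[R]_1 * 'cV[R]_m * 'cV[R]_1 * 'cV[R]_1 * R =>
  c *: (p.1.1.1.1 + M *m (X *m p.1.1.2 - L *m p.1.1.1.2)).
exists phi, g; split; [|split].
- move=> x i v t dx di dv _ r r0 dr dr0.
  have rE : r = fun s => col_mx (K *m derive1 x s + L *m x s - X *m i s)
                                (X^T *m derive1 x s - v s) by [].
  clearbody r.
  set x' := derive1 x t.
  have E0 : K *m x' = X *m i t - L *m x t.
    move: r0; rewrite rE => /eqP; rewrite col_mx_eq0 => /andP[/eqP + _].
    by move/eqP; rewrite subr_eq0 eq_sym -subr_eq eq_sym => /eqP.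
  pose E1 := row_mx Q (0 : 'M[R]_(m, 1)).
  have [_ h1] := derive1_linear (F := mulmx E1) (mulmx_cont (A := E1)) dr.
  have eq1 : mulmx E1 \o r = mulmx (Q *m L) \o x.
    apply/funext => s /=; rewrite rE mul_row_col mul0mx addr0.
    by rewrite mulmxBr mulmxDr (mulmxA Q K) (mulmxA Q L) (mulmxA Q X) QK QX !mul0mx add0r subr0.
  have [_ h1'] := derive1_linear (F := mulmx (Q *m L)) (mulmx_cont (A := Q *m L)) (dx t).
  have QLx : Q *m L *m x' = 0.
    by rewrite -[LHS]h1' -eq1 h1 dr0; exact: mulmx0.
  have xphi : x' = phi (x t) (i t) (v t) t.
    rewrite /phi /P1 -mulmxA mul_col_mx mul1mx mul0mx -E0 -QLx -mul_col_mx mulmxA PB.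
    by rewrite mul1mx.
  split; first exact: xphi.
  pose E2 := row_mx zT (- 1%:M : 'M[R]_1).
  have [_ h2] := derive1_linear (F := mulmx E2) (mulmx_cont (A := E2)) dr.
  pose F1 := mulmx (zT *m L) \o x.
  pose F2 := mulmx zX \o i.
  have [dF1 hF1] := derive1_linear (F := mulmx (zT *m L)) (mulmx_cont (A := zT *m L)) (dx t).
  have [dF2 hF2] := derive1_linear (F := mulmx zX) (mulmx_cont (A := zX)) (di t).
  have eq2 : mulmx E2 \o r = (F1 - F2) + v.
    apply/funext => s /=; rewrite rE mul_row_col mulNmx mul1mx XzK.
    have -> : (F1 - F2 + v) s = zT *m L *m x s - zX *m i s + v s by [].
    rewrite mulmxBr mulmxDr (mulmxA zT K) (mulmxA zT L) (mulmxA zT X) -/zX.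
    exact: zmod_re.
  have key : zX *m derive1 i t = zT *m L *m x' + derive1 v t.
    have : derive1 (F1 - F2 + v) t = 0.
      by rewrite -eq2 h2 dr0; exact: mulmx0.
    have dF12 := derivableB dF1 dF2.
    rewrite derive1E (deriveD dF12 (dv t)) (deriveB dF1 dF2) -!derive1E /F1 /F2 hF1 hF2.
    by move/eqP; rewrite addrAC subr_eq0 eq_sym => /eqP.
  rewrite /g /=.
  have -> : M *m (X *m i t - L *m x t) = zT *m L *m x' by rewrite xphi /phi /M !mulmxA.
  rewrite addrC -key.
  have -> : zX *m derive1 i t = zX 0 0 *: derive1 i t.
    by rewrite {1}(mx11_scalar zX) mul_scalar_mx.
  by rewrite scalerA /c mulVf ?scale1r // gt_eqF.
- pose T5 := ('cV[R]_1 * 'cV[R]_m * 'cV[R]_1 * 'cV[R]_1 * R)%type.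
  have c1 : continuous (fun p : T5 => p.1.1.1.1) :=
    cont_comp' (cont_comp' (cont_comp' (@cont_fst _ _) (@cont_fst _ _)) (@cont_fst _ _)) (@cont_fst _ _).
  have c2 : continuous (fun p : T5 => p.1.1.1.2) :=
    cont_comp' (cont_comp' (cont_comp' (@cont_fst _ _) (@cont_fst _ _)) (@cont_fst _ _)) (@cont_snd _ _).
  have c3 : continuous (fun p : T5 => p.1.1.2) :=
    cont_comp' (cont_comp' (@cont_fst _ _) (@cont_fst _ _)) (@cont_snd _ _).
  have -> : g = fun p => (c%:M) *m p.1.1.1.1 + (c *: (M *m X)) *m p.1.1.2
                          - (c *: (M *m L)) *m p.1.1.1.2.
    apply/funext => p; rewrite /g mulmxBr (mulmxA M X) (mulmxA M L).
    by rewrite scalerDr scalerBr addrA -!scalemxAl mul_scalar_mx.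
  apply: contB'; [apply: contD'|].
  + exact: (comp_mulmx_cont c1).
  + exact: (comp_mulmx_cont c3).
  + exact: (comp_mulmx_cont c2).
- exists c; split => // y u ub.
  rewrite /g /= -scalerBr opprD addrACA subrr addr0 /dotv mulr_sumr.
  by apply: ler_sum => k _; rewrite !mxE mulrA.
Qed.
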